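(* Let $h>0$, $0<\alpha\le 2$, $N=2^n$, and $M=2^m$ with $M\ge 2N$. Let $E^{(M)}$ be the $N\times N$ matrix with entries $(E^{(M)})_{ij}=\sum_{\ell\in\mathbb Z\setminus\{0\}}c_{i-j+\ell M}$ for $0\le i,j\le N-1$, where $c_r$ is the kernel defined in the context. Then \[ \|E^{(M)}\|_2\le \sum_{r\in\mathbb Z,\ |r|\ge M-N+1}|c_r|. \]
   Context: For $r\in\mathbb Z$, $c_r=\frac{h}{2\pi}\int_{-\pi/h}^{\pi/h}|\xi|^\alpha e^{i\xi h r}\,d\xi$ (the convolution kernel of the semi-discrete fractional Laplacian with symbol $|\xi|^\alpha$ on the lattice $h\mathbb Z$); it is real and even, $c_r=c_{-r}$. $\|\cdot\|_2$ denotes the spectral (operator 2-)norm. *)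

(* Defs.v *)
From Stdlib Require Import Reals ZArith.
From Coquelicot Require Import Coquelicot.
Open Scope R_scope.

(* |xi|^alpha, with the convention 0^alpha = 0 (alpha > 0). *)
Definition abs_pow (xi alpha : R) : R :=
  match Req_EM_T xi 0 with left _ => 0 | right _ => Rpower (Rabs xi) alpha end.

Definition cexpi (theta : R) : C := (cos theta, sin theta).

(* c_r = h/(2 pi) int_{-pi/h}^{pi/h} |xi|^alpha e^{i xi h r} dxi  (complex Riemann integral).
   The context states this is real; c_r is taken as the real part of that complex number. *)
Definition ckernelC (h alpha : R) (r : Z) : C :=
  scal (h / (2 * PI))
    (@RInt C_R_CompleteNormedModule
          (fun xi : R => scal (abs_pow xi alpha) (cexpi (xi * h * IZR r)))
          (- PI / h) (PI / h)).

Definition ckernel (h alpha : R) (r : Z) : R := Re (ckernelC h alpha r).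

Fixpoint rsum (n : nat) (f : nat -> R) : R :=
  match n with O => 0 | S k => rsum k f + f k end.

Definition vnorm (N : nat) (x : nat -> R) : R := sqrt (rsum N (fun i => x i ^ 2)).

Definition matvec (N : nat) (A : nat -> nat -> R) (x : nat -> R) : nat -> R :=
  fun i => rsum N (fun j => A i j * x j).

Definition opnorm2 (N : nat) (A : nat -> nat -> R) : Rbar :=
  Lub_Rbar (fun t => exists x : nat -> R, vnorm N x <= 1 /\ t = vnorm N (matvec N A x)).

(* (E^{(M)})_{ij} = sum_{l in Z \ {0}} c_{i-j+lM}, written as
   sum_{k >= 0} (c_{i-j+(k+1)M} + c_{i-j-(k+1)M}). *)
Definition Emat (h alpha : R) (N M : nat) (i j : nat) : R :=
  Series (fun k : nat =>
    ckernel h alpha (Z.of_nat i - Z.of_nat j + Z.of_nat (S k) * Z.of_nat M)%Z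
  + ckernel h alpha (Z.of_nat i - Z.of_nat j - Z.of_nat (S k) * Z.of_nat M)%Z).

(* sum_{r in Z, |r| >= K} |c_r|, written as sum_{k>=0} (|c_{K+k}| + |c_{-(K+k)}|)  (K >= 1). *)
Definition tail_abs_sum (h alpha : R) (K : nat) : R :=
  Series (fun k : nat =>
    Rabs (ckernel h alpha (Z.of_nat (K + k)))
  + Rabs (ckernel h alpha (- Z.of_nat (K + k))%Z)).

(* Main.v *)
Require Import Defs.
From Stdlib Require Import Reals ZArith Lia Lra.
From Coquelicot Require Import Coquelicot.
Open Scope R_scope.

Lemma sum_n_rsum (u : nat -> R) n : sum_n u n = rsum (S n) u.
Proof.
  induction n as [|n IH].
  - rewrite sum_O. simpl. ring.
  - rewrite sum_Sn, IH. simpl. reflexivity.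
Qed.

Lemma rsum_nonneg n u : (forall k, 0 <= u k) -> 0 <= rsum n u.
Proof. intros H; induction n; simpl; [lra| specialize (H n); lra]. Qed.

Lemma rsum_le n u v : (forall k, (k < n)%nat -> u k <= v k) -> rsum n u <= rsum n v.
Proof. intros H; induction n; simpl; [lra|].
  assert (u n <= v n) by (apply H; lia).
  assert (rsum n u <= rsum n v) by (apply IHn; intros; apply H; lia). lra. Qed.

Lemma rsum_ext n u v : (forall k, (k < n)%nat -> u k = v k) -> rsum n u = rsum n v.
Proof. intros H; induction n; simpl; [lra|].
  rewrite (H n) by lia. rewrite IHn; [reflexivity|]. intros; apply H; lia. Qed.

Lemma rsum_mono n m u : (forall k, 0 <= u k) -> (n <= m)%nat -> rsum n u <= rsum m u.
Proof. intros H Hnm; induction Hnm; simpl; [lra|]. specialize (H m); lra. Qed.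

Lemma series_bounded (u : nat -> R) B :
  (forall n, 0 <= u n) -> (forall n, rsum n u <= B) -> ex_series u /\ Series u <= B.
Proof.
  intros Hpos HB.
  assert (Hf : ex_finite_lim_seq (sum_n u)).
  { apply (ex_finite_lim_seq_incr _ B).
    - intros n. rewrite !sum_n_rsum. simpl. specialize (Hpos (S n)). simpl in *. lra.
    - intros n. rewrite sum_n_rsum. apply HB. }
  destruct Hf as [l Hl].
  split.
  - exists l. exact Hl.
  - unfold Series. rewrite (is_lim_seq_unique _ _ Hl). simpl.
    assert (H := is_lim_seq_le (sum_n u) (fun _ => B) l B).
    simpl in H. apply H; auto.
    + intros n; rewrite sum_n_rsum; apply HB.
    + apply is_lim_seq_const.
Qed.

Lemma rsum_le_series (u : nat -> R) n :
  (forall n, 0 <= u n) -> ex_series u -> rsum n u <= Series u.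
Proof.
  intros Hpos [l Hl]. change (is_lim_seq (sum_n u) l) in Hl.
  destruct n as [|n]. 
  - simpl. unfold Series. rewrite (is_lim_seq_unique _ _ Hl). simpl.
    assert (0 <= sum_n u 0 <= l). { split. rewrite sum_O; auto.
      apply (is_lim_seq_incr_compare _ _ Hl). intros k; rewrite sum_Sn. specialize (Hpos (S k)). unfold plus; simpl. lra. }
    lra.
  - rewrite <- sum_n_rsum. unfold Series. rewrite (is_lim_seq_unique _ _ Hl). simpl.
    apply (is_lim_seq_incr_compare _ _ Hl). intros k; rewrite sum_Sn. specialize (Hpos (S k)). unfold plus; simpl. lra.
Qed.

Lemma tele_ineq x s : 1 <= x -> 0 < s ->
  s * Rpower (x+1) (-(1+s)) <= Rpower x (-s) - Rpower (x+1) (-s).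
Proof.
  intros Hx Hs. unfold Rpower.
  set (a := ln x). set (b := ln (x+1)).
  assert (Ea : exp a = x) by (apply exp_ln; lra).
  assert (Eb : exp b = x + 1) by (apply exp_ln; lra).
  assert (H1 : exp (a - b) = x / (x+1)).
  { unfold Rminus. rewrite exp_plus, exp_Ropp, Ea, Eb. reflexivity. }
  assert (H2 := exp_ineq1_le (a - b)). rewrite H1 in H2.
  assert (Hba : b - a >= 1 / (x+1)).
  { assert (x / (x+1) = 1 - 1/(x+1)) by (field; lra). lra. }
  assert (E1 : exp (- (1 + s) * b) = exp (-s * b) / (x+1)).
  { replace (- (1 + s) * b) with (-s * b + - b) by ring.
    rewrite exp_plus, exp_Ropp, Eb. reflexivity. }
  assert (E2 : exp (-s * a) = exp (-s*b) * exp (s * (b - a))).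
  { rewrite <- exp_plus. f_equal. ring. }
  rewrite E1, E2.
  assert (H3 := exp_ineq1_le (s * (b - a))).
  assert (Hp := exp_pos (-s*b)).
  assert (s * (b - a) >= s * (1/(x+1))) by (apply Rmult_ge_compat_l; lra).
  assert (exp (- s * b) * (exp (s * (b - a)) - 1 - s * (1/(x+1))) >= 0).
  { apply Rle_ge, Rmult_le_pos; lra. }
  unfold Rdiv in *. nra.
Qed.

Lemma psum_bound x0 s : 1 <= x0 -> 0 < s -> forall T,
  rsum T (fun t => Rpower (x0 + 1 + INR t) (-(1+s))) <= / s * Rpower x0 (-s).
Proof.
  intros Hx Hs T.
  assert (forall T, rsum T (fun t => Rpower (x0 + 1 + INR t) (-(1+s)))
     <= / s * (Rpower x0 (-s) - Rpower (x0 + INR T) (-s))).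
  { induction T0 as [|T0 IH]; cbn [rsum].
    - simpl. rewrite Rplus_0_r. lra.
    - assert (INR T0 >= 0) by (apply Rle_ge, pos_INR).
      assert (Ht := tele_ineq (x0 + INR T0) s ltac:(lra) Hs).
      replace (x0 + INR (S T0)) with (x0 + INR T0 + 1) by (rewrite S_INR; ring).
      replace (x0 + 1 + INR T0) with (x0 + INR T0 + 1) by ring.
      assert (Hi : 0 < / s) by (apply Rinv_0_lt_compat; lra).
      assert (Rpower (x0 + INR T0 + 1) (- (1 + s)) <= / s * (Rpower (x0 + INR T0) (- s) - Rpower (x0 + INR T0 + 1) (- s))).
      { apply (Rmult_le_reg_l s); [lra|]. rewrite <- Rmult_assoc, Rinv_r, Rmult_1_l by lra. exact Ht. }
      rewrite Rmult_minus_distr_l in *. lra. }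
  eapply Rle_trans; [apply H|].
  assert (0 < / s) by (apply Rinv_0_lt_compat; lra).
  assert (0 < Rpower (x0 + INR T) (- s)) by (unfold Rpower; apply exp_pos).
  apply Rmult_le_compat_l; lra.
Qed.

Lemma Rpower_cont y a : 0 < y -> continuous (fun t => Rpower t a) y.
Proof.
  intros Hy. apply (@ex_derive_continuous R_AbsRing R_NormedModule). exists (a * Rpower y (a - 1)).
  apply is_derive_Reals. apply derivable_pt_lim_power; auto.
Qed.

Lemma abs_pow_nz x a : x <> 0 -> abs_pow x a = Rpower (Rabs x) a.
Proof. intros H. unfold abs_pow. destruct (Req_EM_T x 0); [contradiction|reflexivity]. Qed.

Lemma abs_pow_0 a : abs_pow 0 a = 0.
Proof. unfold abs_pow. destruct (Req_EM_T 0 0); [reflexivity|contradiction]. Qed.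

Lemma abs_pow_nonneg x a : 0 <= abs_pow x a.
Proof. unfold abs_pow. destruct (Req_EM_T x 0). lra. unfold Rpower. left; apply exp_pos. Qed.

Lemma abs_pow_cont a (ha : 0 < a) x : continuous (fun t => abs_pow t a) x.
Proof.
  destruct (Req_EM_T x 0) as [->|Hx].
  - apply continuity_pt_filterlim. unfold continuity_pt, continue_in, limit1_in, limit_in.
    intros eps Heps. exists (Rpower eps (/a)). split. unfold Rpower; apply exp_pos.
    intros y [_ Hy]. simpl in Hy. unfold R_dist in *. rewrite abs_pow_0.
    rewrite Rminus_0_r in *. simpl. unfold R_dist. rewrite Rminus_0_r. rewrite Rabs_pos_eq by apply abs_pow_nonneg.
    destruct (Req_EM_T y 0) as [->|Hy0].
    + rewrite abs_pow_0; lra.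
    + rewrite abs_pow_nz by auto.
      replace eps with (Rpower (Rpower eps (/a)) a).
      * apply Rlt_Rpower_l; auto. split; auto. apply Rabs_pos_lt; auto.
      * rewrite Rpower_mult. rewrite Rinv_l by lra. apply Rpower_1; auto.
  - apply (continuous_ext_loc _ (fun t => Rpower (Rabs t) a)).
    + assert (Hp : 0 < Rabs x) by (apply Rabs_pos_lt; auto).
      exists (mkposreal _ Hp). intros y Hy. simpl in Hy.
      unfold ball in Hy; simpl in Hy; unfold AbsRing_ball, abs, minus, plus, opp in Hy; simpl in Hy.
      assert (y <> 0). { intros ->. rewrite Rplus_0_l, Rabs_Ropp in Hy. lra. }
      rewrite abs_pow_nz; auto.
    + apply (continuous_comp Rabs (fun t => Rpower t a)). apply continuous_Rabs.
      apply Rpower_cont. apply Rabs_pos_lt; auto.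
Qed.

Lemma integrand_cont a (ha : 0 < a) w x :
  continuous (fun t => abs_pow t a * cos (t * w)) x.
Proof.
  apply (continuous_mult (fun t => abs_pow t a) (fun t => cos (t * w))).
  apply abs_pow_cont; auto.
  apply continuous_cos_comp. apply (continuous_mult (fun t => t) (fun _ => w)).
  apply continuous_id. apply continuous_const.
Qed.

Lemma exRInt_F a w x y : 0 < a -> ex_RInt (fun t => abs_pow t a * cos (t * w)) x y.
Proof. intros ha. apply (@ex_RInt_continuous R_CompleteNormedModule). intros z _. apply integrand_cont; auto. Qed.

Lemma Rplus_plus (x y : R) : plus x y = x + y.
Proof. reflexivity. Qed.
Lemma Rminus_minus (x y : R) : minus x y = x - y.
Proof. reflexivity. Qed.

Section Est.
Variables (a w L d : R).
Hypotheses (ha : 0 < a) (hd : 0 < d) (hdL : d <= L) (hw : 0 < w) (hs : sin (L * w) = 0).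

Let p t := Rpower t a.
Let p1 t := a * Rpower t a / t.
Let p2 t := a * (a - 1) * Rpower t a / (t * t).
Let A t := Rpower t a * sin (t*w) / w + a * Rpower t a / t * cos (t*w) / (w*w).
Let dA t := Rpower t a * cos (t*w) + a*(a-1)*Rpower t a/(t*t) * cos (t*w) / (w*w).
Let sg := if Rle_dec 1 a then 1 else -1.
Let G t := sg * (a * Rpower t a / t) / (w * w).
Let dG t := sg * (a * (a - 1) * Rpower t a / (t * t)) / (w * w).
Let H t := a*(a-1)*Rpower t a/(t*t) * cos (t*w) / (w*w).

Lemma Rpower_pos t : 0 < Rpower t a.
Proof. unfold Rpower; apply exp_pos. Qed.

Lemma A_deriv t : 0 < t -> is_derive A t (dA t).
Proof. intros Ht. unfold A, dA, Rpower. auto_derive. lra. field. lra. Qed.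

Lemma G_deriv t : 0 < t -> is_derive G t (dG t).
Proof. intros Ht. unfold G, dG, Rpower. auto_derive. lra. field. lra. Qed.

Lemma dA_cont t : 0 < t -> continuous dA t.
Proof. intros Ht. apply (@ex_derive_continuous R_AbsRing R_NormedModule).
  unfold dA, Rpower. auto_derive. assert (t*t>0) by nra. repeat split; lra. Qed.

Lemma dG_cont t : 0 < t -> continuous dG t.
Proof. intros Ht. apply (@ex_derive_continuous R_AbsRing R_NormedModule).
  unfold dG, Rpower. auto_derive. assert (t*t>0) by nra. repeat split; lra. Qed.

Lemma H_cont t : 0 < t -> continuous H t.
Proof. intros Ht. apply (@ex_derive_continuous R_AbsRing R_NormedModule).
  unfold H, Rpower. auto_derive. assert (t*t>0) by nra. repeat split; lra. Qed.

Lemma abs_cos_le x : Rabs (cos x) <= 1.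
Proof. destruct (COS_bound x). apply Rabs_le; lra. Qed.
Lemma abs_sin_le x : Rabs (sin x) <= 1.
Proof. destruct (SIN_bound x). apply Rabs_le; lra. Qed.

Lemma main_est :
  Rabs (RInt (fun t => abs_pow t a * cos (t * w)) 0 L)
  <= d * Rpower d a + Rpower d a / w + 2 * (p1 L + p1 d) / (w * w).
Proof.
  set (F := fun t => abs_pow t a * cos (t * w)).
  rewrite <- (RInt_Chasles F 0 d L) by (apply exRInt_F; auto).
  rewrite Rplus_plus.
  assert (B1 : Rabs (RInt F 0 d) <= (d - 0) * Rpower d a).
  { apply abs_RInt_le_const. lra. apply exRInt_F; auto.
    intros t [Ht1 Ht2]. unfold F. rewrite Rabs_mult.
    assert (Rabs (cos (t*w)) <= 1) by apply abs_cos_le.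
    assert (abs_pow t a <= Rpower d a).
    { destruct (Req_EM_T t 0) as [->|Ht0]. rewrite abs_pow_0. left; apply Rpower_pos.
      rewrite abs_pow_nz by auto. rewrite Rabs_pos_eq by lra. apply Rle_Rpower_l; lra. }
    rewrite (Rabs_pos_eq (abs_pow t a)) by apply abs_pow_nonneg.
    assert (0 <= abs_pow t a) by apply abs_pow_nonneg.
    assert (0 <= Rabs (cos (t * w))) by apply Rabs_pos.
    nra. }
  assert (HdA : is_RInt dA d L (A L - A d)).
  { apply (@is_RInt_derive R_CompleteNormedModule).
    - intros x Hx. rewrite Rmin_left, Rmax_right in Hx by lra. apply A_deriv. lra.
    - intros x Hx. rewrite Rmin_left, Rmax_right in Hx by lra. apply dA_cont. lra. }
  assert (HdG : is_RInt dG d L (G L - G d)).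
  { apply (@is_RInt_derive R_CompleteNormedModule).
    - intros x Hx. rewrite Rmin_left, Rmax_right in Hx by lra. apply G_deriv. lra.
    - intros x Hx. rewrite Rmin_left, Rmax_right in Hx by lra. apply dG_cont. lra. }
  assert (exH : ex_RInt H d L).
  { apply (@ex_RInt_continuous R_CompleteNormedModule).
    intros x Hx. rewrite Rmin_left, Rmax_right in Hx by lra. apply H_cont. lra. }
  assert (E2 : RInt F d L = (A L - A d) - RInt H d L).
  { rewrite <- (is_RInt_unique _ _ _ _ HdA).
    rewrite <- Rminus_minus.
    assert (Em := @RInt_minus R_CompleteNormedModule dA H d L (ex_intro _ _ HdA) exH).
    etransitivity; [|exact Em].
    apply RInt_ext. intros x Hx. rewrite Rmin_left, Rmax_right in Hx by lra.
    unfold F, dA, H. rewrite abs_pow_nz by lra. rewrite Rabs_pos_eq by lra.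
    unfold minus, plus, opp; simpl. ring. }
  assert (B3 : Rabs (RInt H d L) <= G L - G d).
  { rewrite <- (is_RInt_unique _ _ _ _ HdG).
    eapply Rle_trans. apply abs_RInt_le. lra. exact exH.
    apply RInt_le. lra.
    - apply (@ex_RInt_continuous R_CompleteNormedModule).
      intros x Hx. rewrite Rmin_left, Rmax_right in Hx by lra.
      apply (continuous_comp H Rabs). apply H_cont; lra. apply continuous_Rabs.
    - eexists; exact HdG.
    - intros x Hx. unfold H, dG.
      assert (Hx0 : 0 < x) by lra.
      assert (Hp := Rpower_pos x).
      assert (Hc := abs_cos_le (x * w)).
      assert (Hsg : sg * (a - 1) = Rabs (a - 1)).
      { unfold sg. destruct (Rle_dec 1 a). rewrite Rabs_pos_eq by lra. ring.
        rewrite Rabs_left by lra. ring. }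
      assert (Hww : 0 < w * w) by nra.
      assert (Hxx : 0 < x * x) by nra.
      replace (sg * (a * (a - 1) * Rpower x a / (x * x)) / (w * w))
        with (a * Rabs (a-1) * Rpower x a / (x*x) / (w*w)) by (rewrite <- Hsg; field; lra).
      replace (a * (a - 1) * Rpower x a / (x * x) * cos (x * w) / (w * w))
        with ((a - 1) * cos (x * w) * (a * Rpower x a / (x*x) / (w*w))) by (field; lra).
      rewrite Rabs_mult.
      replace (a * Rabs (a - 1) * Rpower x a / (x * x) / (w * w))
        with (Rabs (a - 1) * (a * Rpower x a / (x*x) / (w*w))) by (field; lra).
      assert (0 < a * Rpower x a / (x*x) / (w*w)).
      { apply Rdiv_lt_0_compat; [apply Rdiv_lt_0_compat|]; nra. }
      rewrite (Rabs_pos_eq (a * Rpower x a / (x*x) / (w*w))) by lra.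
      apply Rmult_le_compat_r. lra. rewrite Rabs_mult.
      assert (0 <= Rabs (a-1)) by apply Rabs_pos.
      assert (0 <= Rabs (cos (x * w))) by apply Rabs_pos.
      nra. }
  rewrite E2.
  assert (Hww : 0 < w * w) by nra.
  assert (HL : 0 < L) by lra.
  assert (BL : Rabs (A L) <= p1 L / (w * w)).
  { unfold A, p1. rewrite hs. rewrite Rmult_0_r. unfold Rdiv at 1. rewrite Rmult_0_l, Rplus_0_l.
    assert (Hp := Rpower_pos L).
    replace (a * Rpower L a / L * cos (L * w) / (w * w)) with (cos (L * w) * (a * Rpower L a / L / (w * w))) by (field; lra).
    rewrite Rabs_mult. rewrite (Rabs_pos_eq (a * Rpower L a / L / (w*w))).
    assert (Hc := abs_cos_le (L * w)).
    assert (0 <= a * Rpower L a / L / (w * w)). { left. apply Rdiv_lt_0_compat; [apply Rdiv_lt_0_compat|]; nra. }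
    replace (a * Rpower L a / L / (w * w)) with (1 * (a * Rpower L a / L / (w * w))) at 2 by ring.
    apply Rmult_le_compat_r; lra.
    left. apply Rdiv_lt_0_compat; [apply Rdiv_lt_0_compat|]; nra. }
  assert (Bd : Rabs (A d) <= Rpower d a / w + p1 d / (w * w)).
  { unfold A, p1. eapply Rle_trans. apply Rabs_triang.
    assert (Hp := Rpower_pos d).
    apply Rplus_le_compat.
    - replace (Rpower d a * sin (d * w) / w) with (sin (d * w) * (Rpower d a / w)) by (field; lra).
      rewrite Rabs_mult, (Rabs_pos_eq (Rpower d a / w)).
      assert (Hc := abs_sin_le (d * w)).
      assert (0 <= Rpower d a / w) by (left; apply Rdiv_lt_0_compat; lra).
      nra. left; apply Rdiv_lt_0_compat; lra.
    - replace (a * Rpower d a / d * cos (d * w) / (w * w)) with (cos (d * w) * (a * Rpower d a / d / (w * w))) by (field; lra).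
      assert (0 < a * Rpower d a / d / (w * w)). { apply Rdiv_lt_0_compat; [apply Rdiv_lt_0_compat|]; nra. }
      rewrite Rabs_mult, (Rabs_pos_eq (a * Rpower d a / d / (w * w))) by lra.
      assert (Hc := abs_cos_le (d * w)).
      nra. }
  assert (BG : G L - G d <= (p1 L + p1 d) / (w * w)).
  { unfold G, p1.
    assert (0 < a * Rpower L a / L) by (apply Rdiv_lt_0_compat; [apply Rmult_lt_0_compat; [lra|apply Rpower_pos]|lra]).
    assert (0 < a * Rpower d a / d) by (apply Rdiv_lt_0_compat; [apply Rmult_lt_0_compat; [lra|apply Rpower_pos]|lra]).
    unfold Rdiv at 3 4 5. 
    assert (0 < / (w * w)) by (apply Rinv_0_lt_compat; lra).
    unfold sg; destruct (Rle_dec 1 a); nra. }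
  assert (Hrr := Rabs_triang (A L - A d) (- RInt H d L)).
  assert (Hrr2 := Rabs_triang (A L) (- A d)).
  rewrite Rabs_Ropp in Hrr, Hrr2.
  unfold Rminus at 1 in Hrr. 
  eapply Rle_trans. apply Rabs_triang.
  replace (A L - A d - RInt H d L) with (A L - A d + - RInt H d L) by ring.
  rewrite Rminus_0_r in B1.
  unfold Rminus in Hrr2 |- *.
  unfold Rminus in Hrr.
  assert (2 * (p1 L + p1 d) / (w * w) = p1 L / (w*w) + p1 d / (w*w) + (p1 L + p1 d) / (w * w)) by (field; lra).
  lra.
Qed.
End Est.

Lemma exp_le x y : x <= y -> exp x <= exp y.
Proof. intros [H| ->]; [left; apply exp_increasing; auto | right; reflexivity]. Qed.

Lemma bound_terms a L h rho : 0 < a -> 0 < L -> 0 < h -> 1 <= rho ->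
  let d := L / rho in let w := h * rho in
  d * Rpower d a + Rpower d a / w + 2 * (a * Rpower L a / L + a * Rpower d a / d) / (w * w)
  <= (L * Rpower L a + Rpower L a / h + 4 * a * Rpower L a / (L * h * h)) * Rpower rho (-(1 + Rmin a 1)).
Proof.
  intros ha hL hh hr d w.
  set (l := ln rho).
  assert (Hl : 0 <= l) by (unfold l; rewrite <- ln_1; apply ln_le; lra).
  assert (Er : rho = exp l) by (unfold l; rewrite exp_ln; lra).
  set (u := exp (- l)). set (v := exp (- a * l)). set (q := exp (- (1 + Rmin a 1) * l)).
  set (La := Rpower L a).
  assert (HLa : 0 < La) by (unfold La, Rpower; apply exp_pos).
  assert (Hu : 0 < u) by apply exp_pos. assert (Hv : 0 < v) by apply exp_pos.
  assert (Hu1 : u <= 1). { unfold u. rewrite <- exp_0. apply exp_le; lra. } 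
  assert (Eru : rho * u = 1). { rewrite Er. unfold u. rewrite <- exp_plus. replace (l + - l) with 0 by ring. apply exp_0. }
  assert (Hq : Rpower rho (- (1 + Rmin a 1)) = q).
  { unfold Rpower, q. fold l. reflexivity. }
  assert (Er' : rho = / u). { rewrite <- (Rmult_1_l (/u)), <- Eru. field. lra. }
  assert (Hd : d = L * u). { unfold d. rewrite Er'. field. lra. }
  assert (Hda : Rpower d a = La * v).
  { rewrite Hd. unfold La, v, u, Rpower. rewrite ln_mult, ln_exp by (try apply exp_pos; lra).
    rewrite <- exp_plus. f_equal. ring. }
  assert (Huv : u * v <= q).
  { unfold u, v, q. rewrite <- exp_plus. apply exp_le.
    assert (Rmin a 1 <= a) by apply Rmin_l. nra. }
  assert (Huu : u * u <= q).
  { unfold u, q. rewrite <- exp_plus. apply exp_le.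
    assert (Rmin a 1 <= 1) by apply Rmin_r. nra. }
  rewrite Hq, Hda, Hd. unfold w.
  replace (L * u * (La * v)) with (L * La * (u * v)) by ring.
  rewrite Er'.
  replace (La * v / (h * / u)) with (La / h * (u * v)) by (field; lra).
  replace (2 * (a * La / L + a * (La * v) / (L * u)) / (h * / u * (h * / u)))
    with (2 * a * La / (L * h * h) * (u * u) + 2 * a * La / (L * h * h) * (u * v))
    by (field; lra).
  assert (0 < L * La) by nra.
  assert (0 < La / h) by (apply Rdiv_lt_0_compat; lra).
  assert (0 < 2 * a * La / (L * h * h)).
  { apply Rdiv_lt_0_compat. nra. assert (0 < L * h) by nra. nra. }
  replace (4 * a * La / (L * h * h)) with (2 * (2 * a * La / (L * h * h))) by (field; lra).
  nra.
Qed.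

Lemma abs_pow_opp x a : abs_pow (- x) a = abs_pow x a.
Proof. unfold abs_pow. destruct (Req_EM_T (-x) 0), (Req_EM_T x 0); try reflexivity; try lra.
  rewrite Rabs_Ropp; reflexivity. Qed.

Lemma RInt_sym a w L : 0 < a ->
  RInt (fun t => abs_pow t a * cos (t * w)) (- L) L = 2 * RInt (fun t => abs_pow t a * cos (t * w)) 0 L.
Proof.
  intros ha. set (F := fun t => abs_pow t a * cos (t * w)).
  assert (HI : is_RInt F 0 L (RInt F 0 L)) by (apply (@RInt_correct R_CompleteNormedModule); apply exRInt_F; auto).
  assert (H1 : is_RInt F (- 0) (- - L) (RInt F 0 L)) by (rewrite Ropp_0, Ropp_involutive; exact HI).
  apply is_RInt_comp_opp in H1.
  apply is_RInt_swap in H1.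
  apply (is_RInt_scal _ _ _ (-1)) in H1.
  apply (is_RInt_ext _ F) in H1.
  2: { intros x _. unfold F. unfold scal, opp; simpl. unfold mult; simpl. rewrite abs_pow_opp.
       replace (- x * w) with (- (x * w)) by ring. rewrite cos_neg. ring. }
  rewrite <- (RInt_Chasles F (-L) 0 L) by (apply exRInt_F; auto).
  rewrite (is_RInt_unique _ _ _ _ H1). unfold scal, opp, plus; simpl. unfold mult; simpl. ring.
Qed.

Lemma Re_scal k (z : C): Re (@scal R_Ring (CompleteNormedModule.ModuleSpace R_AbsRing C_R_CompleteNormedModule) k z) = k * Re z.
Proof. destruct z. reflexivity. Qed.

Lemma Re_RInt (f : R -> C) a b :
  ex_RInt (fun t => fst (f t)) a b -> ex_RInt (fun t => snd (f t)) a b ->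
  Re (@RInt C_R_CompleteNormedModule f a b) = RInt (fun t => fst (f t)) a b.
Proof.
  intros H1 H2.
  assert (H : @ex_RInt C_R_CompleteNormedModule f a b) by exact (@ex_RInt_fct_extend_pair R_NormedModule R_NormedModule f a b H1 H2).
  symmetry. apply is_RInt_unique.
  exact (@is_RInt_fct_extend_fst R_NormedModule R_NormedModule f a b _ (RInt_correct _ _ _ H)).
Qed.

Lemma integrand_cont_sin a (ha : 0 < a) w x :
  continuous (fun t => abs_pow t a * sin (t * w)) x.
Proof.
  apply (continuous_mult (fun t => abs_pow t a) (fun t => sin (t * w))).
  apply abs_pow_cont; auto.
  apply continuous_sin_comp. apply (continuous_mult (fun t => t) (fun _ => w)).
  apply continuous_id. apply continuous_const.
Qed.

Lemma ck_eq h a r : 0 < a ->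
  ckernel h a r = h / (2 * PI) * RInt (fun t => abs_pow t a * cos (t * (h * IZR r))) (- PI / h) (PI / h).
Proof.
  intros ha. unfold ckernel, ckernelC. rewrite Re_scal. f_equal.
  rewrite Re_RInt.
  - apply RInt_ext. intros x _. simpl. unfold scal; simpl. unfold mult; simpl.
    f_equal. f_equal. ring.
  - apply (ex_RInt_ext (fun t => abs_pow t a * cos (t * (h * IZR r)))).
    intros x _. simpl. unfold scal; simpl. unfold mult; simpl. f_equal. f_equal. ring.
    apply exRInt_F; auto.
  - apply (ex_RInt_ext (fun t => abs_pow t a * sin (t * (h * IZR r)))).
    intros x _. simpl. unfold scal; simpl. unfold mult; simpl. f_equal. f_equal. ring.
    apply (@ex_RInt_continuous R_CompleteNormedModule). intros z _. apply integrand_cont_sin; auto.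
Qed.

Definition Dk (h a : R) : R :=
  let L := PI / h in h / PI * (L * Rpower L a + Rpower L a / h + 4 * a * Rpower L a / (L * h * h)).

Lemma ck_bound h a r : 0 < h -> 0 < a -> r <> 0%Z ->
  Rabs (ckernel h a r) <= Dk h a * Rpower (IZR (Z.abs r)) (-(1 + Rmin a 1)).
Proof.
  intros hh ha hr. rewrite ck_eq by auto.
  set (rho := IZR (Z.abs r)).
  assert (Hrho : 1 <= rho) by (unfold rho; apply IZR_le; lia).
  set (L := PI / h).
  assert (HPI := PI_RGT_0).
  assert (HL : 0 < L) by (unfold L; apply Rdiv_lt_0_compat; lra).
  replace (- PI / h) with (- L) by (unfold L; field; lra).
  rewrite (RInt_ext _ (fun t => abs_pow t a * cos (t * (h * rho)))).
  2: { intros x _. f_equal. unfold rho. rewrite abs_IZR.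
       destruct (Rcase_abs (IZR r)) as [Hn|Hp].
       - rewrite Rabs_left by auto. replace (x * (h * - IZR r)) with (- (x * (h * IZR r))) by ring.
         rewrite cos_neg; reflexivity.
       - rewrite Rabs_pos_eq by lra. reflexivity. }
  rewrite RInt_sym by auto.
  assert (Hw : 0 < h * rho) by nra.
  assert (Hd : 0 < L / rho) by (apply Rdiv_lt_0_compat; lra).
  assert (HdL : L / rho <= L).
  { unfold Rdiv. replace L with (L * 1) at 2 by ring. apply Rmult_le_compat_l. lra.
    rewrite <- Rinv_1. apply Rinv_le_contravar; lra. }
  assert (Hs : sin (L * (h * rho)) = 0).
  { apply sin_eq_0_1. exists (Z.abs r). unfold rho, L. field. lra. }
  assert (Hm := main_est a (h * rho) L (L / rho) ha Hd HdL Hw Hs).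
  assert (Hb := bound_terms a L h rho ha HL hh Hrho). simpl in Hb.
  rewrite Rabs_mult, Rabs_mult.
  rewrite (Rabs_pos_eq (h / (2 * PI))) by (left; apply Rdiv_lt_0_compat; lra).
  rewrite (Rabs_pos_eq 2) by lra.
  unfold Dk. fold L.
  assert (0 < h / (2 * PI)) by (apply Rdiv_lt_0_compat; lra).
  replace (h / PI) with (h / (2 * PI) * 2) by (field; lra).
  set (X := (L * Rpower L a + Rpower L a / h + 4 * a * Rpower L a / (L * h * h))) in *.
  apply Rle_trans with (h / (2 * PI) * (2 * (X * Rpower rho (- (1 + Rmin a 1))))); [|right; ring].
  apply Rmult_le_compat_l. lra.
  apply Rmult_le_compat_l. lra.
  eapply Rle_trans; [exact Hm | exact Hb].
Qed.

Lemma rsum_plus n f g : rsum n (fun k => f k + g k) = rsum n f + rsum n g.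
Proof. induction n; simpl; [ring | rewrite IHn; ring]. Qed.

Lemma rsum_scal n c f : rsum n (fun k => c * f k) = c * rsum n f.
Proof. induction n; simpl; [ring | rewrite IHn; ring]. Qed.

Lemma rsum_split n m g : rsum (n + m) g = rsum n g + rsum m (fun u => g (n + u)%nat).
Proof. induction m; simpl.
  - rewrite Nat.add_0_r; ring.
  - rewrite Nat.add_succ_r. simpl. rewrite IHm. ring. Qed.

Lemma rsum_shift n f : rsum (S n) f = f 0%nat + rsum n (fun q => f (S q)).
Proof. induction n. simpl; ring. cbn [rsum] in *. rewrite IHn. ring. Qed.

Lemma rsum_rev n f : rsum n (fun q => f (n - 1 - q)%nat) = rsum n f.
Proof.
  revert f; induction n as [|n IH]; intros f. reflexivity.
  rewrite (rsum_shift n f). cbn [rsum]. replace (S n - 1 - n)%nat with 0%nat by lia.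
  rewrite (rsum_ext n (fun q => f (S n - 1 - q)%nat) (fun q => (fun x => f (S x)) (n - 1 - q)%nat)).
  2: { intros k Hk. f_equal. lia. }
  rewrite (IH (fun x => f (S x))). ring.
Qed.

Lemma rsum_block L M g : rsum L (fun k => rsum M (fun u => g (k * M + u)%nat)) = rsum (L * M) g.
Proof.
  induction L as [|L IH]. reflexivity.
  cbn [rsum]. rewrite IH. replace (S L * M)%nat with (L * M + M)%nat by lia.
  rewrite rsum_split. reflexivity.
Qed.

Lemma rsum_window N M p g : (forall k, 0 <= g k) -> (p + N <= M)%nat ->
  rsum N (fun q => g (p + q)%nat) <= rsum M g.
Proof.
  intros Hg Hp. replace M with (p + (M - p))%nat by lia. rewrite rsum_split.
  assert (0 <= rsum p g) by (apply rsum_nonneg; auto).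
  assert (rsum N (fun q => g (p + q)%nat) <= rsum (M - p) (fun u => g (p + u)%nat)).
  { apply rsum_mono. intros; apply Hg. lia. }
  lra.
Qed.

Lemma rsum_window_rev N M p g : (forall k, 0 <= g k) -> (p + N <= M)%nat ->
  rsum N (fun q => g (p + (N - 1 - q))%nat) <= rsum M g.
Proof.
  intros Hg Hp. rewrite (rsum_rev N (fun q => g (p + q)%nat)). apply rsum_window; auto.
Qed.

Lemma rsum_term N f j : (forall k, 0 <= f k) -> (j < N)%nat -> f j <= rsum N f.
Proof.
  intros Hf Hj. induction N. lia. cbn [rsum].
  destruct (Nat.eq_dec j N) as [->|Hne].
  - assert (0 <= rsum N f) by (apply rsum_nonneg; auto). lra.
  - assert (f j <= rsum N f) by (apply IHN; lia). specialize (Hf N). lra.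
Qed.

Lemma rsum_swap N M f : rsum N (fun i => rsum M (fun j => f i j)) = rsum M (fun j => rsum N (fun i => f i j)).
Proof.
  induction N as [|N IH]; simpl.
  - induction M; simpl; [reflexivity| rewrite <- IHM; ring].
  - rewrite IH, <- rsum_plus. reflexivity.
Qed.

Lemma rsum_abs n f : Rabs (rsum n f) <= rsum n (fun k => Rabs (f k)).
Proof. induction n; simpl. rewrite Rabs_R0; lra.
  eapply Rle_trans. apply Rabs_triang. lra. Qed.

Lemma wcs n w y :
  (rsum n (fun j => w j * y j)) ^ 2 <= rsum n (fun j => Rabs (w j)) * rsum n (fun j => Rabs (w j) * y j ^ 2).
Proof.
  assert (H : forall n, (rsum n (fun j => Rabs (w j) * Rabs (y j))) ^ 2
      <= rsum n (fun j => Rabs (w j)) * rsum n (fun j => Rabs (w j) * y j ^ 2)).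
  { clear n. induction n as [|n IH]; cbn [rsum]. lra.
    set (A := rsum n (fun j => Rabs (w j))) in *.
    set (B := rsum n (fun j => Rabs (w j) * y j ^ 2)) in *.
    set (C := rsum n (fun j => Rabs (w j) * Rabs (y j))) in *.
    assert (HA : 0 <= A) by (apply rsum_nonneg; intros; apply Rabs_pos).
    assert (HB : 0 <= B) by (apply rsum_nonneg; intros; apply Rmult_le_pos; [apply Rabs_pos| apply pow2_ge_0]).
    assert (HC : 0 <= C) by (apply rsum_nonneg; intros; apply Rmult_le_pos; apply Rabs_pos).
    set (a := Rabs (w n)). set (c := Rabs (y n)).
    assert (Ha : 0 <= a) by apply Rabs_pos. assert (Hc : 0 <= c) by apply Rabs_pos.
    assert (Ey : y n ^ 2 = c * c) by (unfold c; rewrite <- Rabs_mult, Rabs_pos_eq by nra; ring).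
    rewrite Ey.
    assert (K1 : 2 * c * C <= A * (c * c) + B).
    { destruct (Req_dec A 0) as [HA0|HA0].
      - assert (C = 0) by (rewrite HA0 in IH; nra). subst; nra.
      - assert (A * (A * (c*c) + B - 2 * c * C) >= 0) by (assert (0 <= (A*c - C)^2) by apply pow2_ge_0; nra).
        assert (0 < A) by lra.
        nra. }
    nra. }
  eapply Rle_trans; [|apply H].
  assert (Habs : Rabs (rsum n (fun j => w j * y j)) <= rsum n (fun j => Rabs (w j) * Rabs (y j))).
  { eapply Rle_trans. apply rsum_abs. right. apply rsum_ext. intros; apply Rabs_mult. }
  assert (0 <= Rabs (rsum n (fun j => w j * y j))) by apply Rabs_pos.
  rewrite <- (pow2_abs (rsum n (fun j => w j * y j))).
  apply pow_incr. lra.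
Qed.


Lemma schur N (A : nat -> nat -> R) T : 0 <= T ->
  (forall i, (i < N)%nat -> rsum N (fun j => Rabs (A i j)) <= T) ->
  (forall j, (j < N)%nat -> rsum N (fun i => Rabs (A i j)) <= T) ->
  forall x, rsum N (fun i => matvec N A x i ^ 2) <= T * T * rsum N (fun j => x j ^ 2).
Proof.
  intros HT Hr Hc x.
  apply Rle_trans with (rsum N (fun i => T * rsum N (fun j => Rabs (A i j) * x j ^ 2))).
  { apply rsum_le. intros i Hi. unfold matvec.
    eapply Rle_trans. apply wcs.
    apply Rmult_le_compat_r. apply rsum_nonneg; intros; apply Rmult_le_pos; [apply Rabs_pos|apply pow2_ge_0].
    apply Hr; auto. }
  rewrite rsum_scal, rsum_swap.
  rewrite Rmult_assoc. apply Rmult_le_compat_l; auto.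
  rewrite <- rsum_scal. apply rsum_le. intros j Hj.
  rewrite (rsum_ext N (fun i => Rabs (A i j) * x j ^ 2) (fun i => x j ^ 2 * Rabs (A i j))) by (intros; ring).
  rewrite rsum_scal.
  assert (0 <= x j ^ 2) by apply pow2_ge_0.
  specialize (Hc j Hj). nra.
Qed.

Lemma opnorm_bound N (A : nat -> nat -> R) T : 0 <= T ->
  (forall i, (i < N)%nat -> rsum N (fun j => Rabs (A i j)) <= T) ->
  (forall j, (j < N)%nat -> rsum N (fun i => Rabs (A i j)) <= T) ->
  Rbar_le (opnorm2 N A) (Finite T).
Proof.
  intros HT Hr Hc. unfold opnorm2.
  destruct (Lub_Rbar_correct (fun t => exists x : nat -> R, vnorm N x <= 1 /\ t = vnorm N (matvec N A x))) as [_ Hl].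
  apply Hl. intros t [x [Hx ->]]. simpl.
  unfold vnorm in *.
  set (S := rsum N (fun i => x i ^ 2)) in *.
  assert (HS : 0 <= S) by (apply rsum_nonneg; intros; apply pow2_ge_0).
  assert (HS1 : S <= 1).
  { rewrite <- (sqrt_sqrt S HS). assert (0 <= sqrt S) by apply sqrt_pos. nra. }
  assert (Hsch := schur N A T HT Hr Hc x). fold S in Hsch.
  rewrite <- (sqrt_square T HT).
  apply sqrt_le_1_alt. nra.
Qed.

Lemma series_zero : ex_series (fun _ : nat => 0) /\ Series (fun _ : nat => 0) = 0.
Proof.
  assert (Hr : forall n, rsum n (fun _ => 0) = 0) by (induction n; simpl; [reflexivity| rewrite IHn; ring]).
  destruct (series_bounded (fun _ => 0) 0) as [H1 H2].
  intros; lra. intros n; rewrite Hr; lra.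
  split; auto. assert (H3 := rsum_le_series (fun _ => 0) 0 ltac:(intros; lra) H1). simpl in H3. lra.
Qed.

Lemma series_rsum N (f : nat -> nat -> R) : (forall j, (j < N)%nat -> ex_series (f j)) ->
  ex_series (fun k => rsum N (fun j => f j k)) /\
  rsum N (fun j => Series (f j)) = Series (fun k => rsum N (fun j => f j k)).
Proof.
  induction N as [|N IH]; intros Hf.
  - simpl. destruct series_zero as [H1 H2]. split; auto.
  - destruct IH as [IH1 IH2]. intros; apply Hf; lia.
    assert (HN : ex_series (f N)) by (apply Hf; lia).
    cbn [rsum]. split.
    + exact (@ex_series_plus R_AbsRing R_NormedModule _ _ IH1 HN).
    + rewrite IH2. rewrite Series_plus; auto.
Qed.

Section Comb.
Variables (c : Z -> R) (N M : nat).
Hypotheses (HN : (1 <= N)%nat) (HM : (2 * N <= M)%nat).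
Let K := (M - N + 1)%nat.
Let bp t := Rabs (c (Z.of_nat (K + t))).
Let bm t := Rabs (c (- Z.of_nat (K + t))%Z).
Let aa t := bp t + bm t.
Hypothesis Hex : ex_series aa.
Let T := Series aa.
Let g i j k := Rabs (c (Z.of_nat i - Z.of_nat j + Z.of_nat (S k) * Z.of_nat M)%Z)
             + Rabs (c (Z.of_nat i - Z.of_nat j - Z.of_nat (S k) * Z.of_nat M)%Z).

Lemma aa_pos t : 0 <= aa t.
Proof. unfold aa, bp, bm. assert (H1 := Rabs_pos (c (Z.of_nat (K + t)))).
  assert (H2 := Rabs_pos (c (- Z.of_nat (K + t))%Z)). lra. Qed.

Lemma g_pos i j k : 0 <= g i j k.
Proof. unfold g. assert (H1 := Rabs_pos (c (Z.of_nat i - Z.of_nat j + Z.of_nat (S k) * Z.of_nat M)%Z)).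
  assert (H2 := Rabs_pos (c (Z.of_nat i - Z.of_nat j - Z.of_nat (S k) * Z.of_nat M)%Z)). lra. Qed.

Lemma inner_row i k : (i < N)%nat -> rsum N (fun j => g i j k) <= rsum M (fun u => aa (k * M + u)%nat).
Proof.
  intros Hi.
  rewrite (rsum_ext N (fun j => g i j k)
     (fun j => (fun u => bp (k * M + u)%nat) (i + (N - 1 - j))%nat + (fun u => bm (k * M + u)%nat) ((N - 1 - i) + j)%nat)).
  2: { intros j Hj. unfold g, bp, bm, K. f_equal; f_equal; f_equal; nia. }
  rewrite rsum_plus. unfold aa. rewrite (rsum_plus M (fun u => bp (k * M + u)%nat) (fun u => bm (k * M + u)%nat)).
  apply Rplus_le_compat.
  - apply (rsum_window_rev N M i (fun u => bp (k * M + u)%nat)). intros; apply Rabs_pos. lia.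
  - apply (rsum_window N M (N - 1 - i) (fun u => bm (k * M + u)%nat)). intros; apply Rabs_pos. lia.
Qed.

Lemma inner_col j k : (j < N)%nat -> rsum N (fun i => g i j k) <= rsum M (fun u => aa (k * M + u)%nat).
Proof.
  intros Hj.
  rewrite (rsum_ext N (fun i => g i j k)
     (fun i => (fun u => bp (k * M + u)%nat) ((N - 1 - j) + i)%nat + (fun u => bm (k * M + u)%nat) (j + (N - 1 - i))%nat)).
  2: { intros i Hi. unfold g, bp, bm, K. f_equal; f_equal; f_equal; nia. }
  rewrite rsum_plus. unfold aa. rewrite (rsum_plus M (fun u => bp (k * M + u)%nat) (fun u => bm (k * M + u)%nat)).
  apply Rplus_le_compat.
  - apply (rsum_window N M (N - 1 - j) (fun u => bp (k * M + u)%nat)). intros; apply Rabs_pos. lia.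
  - apply (rsum_window_rev N M j (fun u => bm (k * M + u)%nat)). intros; apply Rabs_pos. lia.
Qed.

Lemma blocks_le L : rsum L (fun k => rsum M (fun u => aa (k * M + u)%nat)) <= T.
Proof. rewrite rsum_block. apply rsum_le_series; auto. apply aa_pos. Qed.

Lemma T_pos : 0 <= T.
Proof. assert (H := rsum_le_series aa 0 aa_pos Hex). simpl in H. exact H. Qed.

Let Em i j := Series (fun k => c (Z.of_nat i - Z.of_nat j + Z.of_nat (S k) * Z.of_nat M)%Z
                            + c (Z.of_nat i - Z.of_nat j - Z.of_nat (S k) * Z.of_nat M)%Z).

Lemma Em_le i j : ex_series (g i j) -> Rabs (Em i j) <= Series (g i j).
Proof.
  intros Hg. unfold Em.
  set (e := fun k => c (Z.of_nat i - Z.of_nat j + Z.of_nat (S k) * Z.of_nat M)%Z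
                   + c (Z.of_nat i - Z.of_nat j - Z.of_nat (S k) * Z.of_nat M)%Z).
  assert (He : forall k, Rabs (e k) <= g i j k) by (intros k; unfold e, g; apply Rabs_triang).
  assert (Hae : ex_series (fun k => Rabs (e k))).
  { apply (@ex_series_le R_AbsRing R_CompleteNormedModule _ (g i j)); auto.
    intros k. change (norm (Rabs (e k))) with (Rabs (Rabs (e k))). rewrite Rabs_Rabsolu. apply He. }
  eapply Rle_trans. apply Series_Rabs; auto.
  apply Series_le; auto. intros k; split; [apply Rabs_pos| apply He].
Qed.

Lemma row_sum i : (i < N)%nat -> rsum N (fun j => Rabs (Em i j)) <= T.
Proof.
  intros Hi.
  assert (Hp : forall L, rsum L (fun k => rsum N (fun j => g i j k)) <= T).
  { intros L. eapply Rle_trans; [|apply (blocks_le L)]. apply rsum_le. intros k _. apply inner_row; auto. }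
  assert (Hg : forall j, (j < N)%nat -> ex_series (g i j)).
  { intros j Hj. apply (series_bounded _ T). apply g_pos. intros L. eapply Rle_trans; [|apply (Hp L)].
    apply rsum_le. intros k _. apply (rsum_term N (fun j' => g i j' k)); auto. intros; apply g_pos. }
  destruct (series_rsum N (g i) Hg) as [H1 H2].
  apply Rle_trans with (rsum N (fun j => Series (g i j))).
  { apply rsum_le. intros j Hj. apply Em_le; auto. }
  rewrite H2. apply (series_bounded _ T). intros; apply rsum_nonneg; intros; apply g_pos. exact Hp.
Qed.

Lemma col_sum j : (j < N)%nat -> rsum N (fun i => Rabs (Em i j)) <= T.
Proof.
  intros Hj.
  assert (Hp : forall L, rsum L (fun k => rsum N (fun i => g i j k)) <= T).
  { intros L. eapply Rle_trans; [|apply (blocks_le L)]. apply rsum_le. intros k _. apply inner_col; auto. }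
  assert (Hg : forall i, (i < N)%nat -> ex_series (g i j)).
  { intros i Hi. apply (series_bounded _ T). apply g_pos. intros L. eapply Rle_trans; [|apply (Hp L)].
    apply rsum_le. intros k _. apply (rsum_term N (fun i' => g i' j k)); auto. intros; apply g_pos. }
  destruct (series_rsum N (fun i => g i j) Hg) as [H1 H2].
  apply Rle_trans with (rsum N (fun i => Series (g i j))).
  { apply rsum_le. intros i Hi. apply Em_le; auto. }
  rewrite H2. apply (series_bounded _ T). intros; apply rsum_nonneg; intros; apply g_pos. exact Hp.
Qed.

Lemma comb_main : Rbar_le (opnorm2 N Em) (Finite T).
Proof. apply opnorm_bound. apply T_pos. apply row_sum. apply col_sum. Qed.

End Comb.

Lemma Dk_nonneg h a : 0 < h -> 0 < a -> 0 <= Dk h a.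
Proof.
  intros hh ha. assert (H := ck_bound h a 1 hh ha ltac:(discriminate)).
  assert (Hp : 0 < Rpower (IZR (Z.abs 1)) (- (1 + Rmin a 1))) by (unfold Rpower; apply exp_pos).
  assert (H0 := Rabs_pos (ckernel h a 1)).
  destruct (Rle_or_lt 0 (Dk h a)); auto. nra.
Qed.

Lemma tail_ex h a K : 0 < h -> 0 < a -> (2 <= K)%nat ->
  ex_series (fun t => Rabs (ckernel h a (Z.of_nat (K + t))) + Rabs (ckernel h a (- Z.of_nat (K + t))%Z)).
Proof.
  intros hh ha HK.
  set (s := Rmin a 1).
  assert (Hs : 0 < s) by (unfold s; apply Rmin_glb_lt; lra).
  set (x0 := INR (K - 1)).
  assert (Hx0 : 1 <= x0) by (unfold x0; replace 1 with (INR 1) by reflexivity; apply le_INR; lia).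
  assert (HD := Dk_nonneg h a hh ha).
  apply (series_bounded _ (2 * Dk h a * (/ s * Rpower x0 (- s)))).
  - intros t. assert (H1 := Rabs_pos (ckernel h a (Z.of_nat (K + t)))).
    assert (H2 := Rabs_pos (ckernel h a (- Z.of_nat (K + t))%Z)). lra.
  - intros L.
    apply Rle_trans with (rsum L (fun t => 2 * Dk h a * Rpower (x0 + 1 + INR t) (- (1 + s)))).
    + apply rsum_le. intros t _.
      assert (E1 : IZR (Z.abs (Z.of_nat (K + t))) = x0 + 1 + INR t).
      { rewrite Z.abs_eq by lia. rewrite <- INR_IZR_INZ. unfold x0.
        replace (K + t)%nat with ((K - 1) + t + 1)%nat by lia. rewrite !plus_INR. simpl. ring. }
      assert (E2 : IZR (Z.abs (- Z.of_nat (K + t))) = x0 + 1 + INR t).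
      { rewrite Z.abs_opp. exact E1. }
      assert (B1 := ck_bound h a (Z.of_nat (K + t)) hh ha ltac:(lia)).
      assert (B2 := ck_bound h a (- Z.of_nat (K + t))%Z hh ha ltac:(lia)).
      rewrite E1 in B1. rewrite E2 in B2. fold s in B1, B2. lra.
    + rewrite rsum_scal. apply Rmult_le_compat_l. lra. apply psum_bound; auto.
Qed.

Theorem mainTheorem3 (h alpha : R) (n m : nat)
  (hh : 0 < h) (ha0 : 0 < alpha) (ha2 : alpha <= 2)
  (hM : (2 * 2 ^ n <= 2 ^ m)%nat) :
  Rbar_le (opnorm2 (2 ^ n) (Emat h alpha (2 ^ n) (2 ^ m)))
          (Finite (tail_abs_sum h alpha (2 ^ m - 2 ^ n + 1))).
Proof.
  assert (HN : (1 <= 2 ^ n)%nat) by (pose proof (Nat.pow_nonzero 2 n ltac:(lia)); lia).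
  exact (comb_main (ckernel h alpha) (2 ^ n) (2 ^ m) HN hM
           (tail_ex h alpha (2 ^ m - 2 ^ n + 1) hh ha0 ltac:(lia))).
Qed.
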